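(* Let $\Gamma$ be an orthosymmetric, convex, compact set and $0<p<1$. If there is a constant $C>0$ with $D(\Gamma,\epsilon)\le C\epsilon^{-p}$ for all $\epsilon\in(0,1]$, then there is a constant $C'>0$ with $D_{\mathsf c}(\Gamma,\epsilon)\le C'\epsilon^{-p/(1-p)}$ for all $\epsilon\in(0,1]$.
   Context: Orthosymmetric: closed under flipping signs of any coordinates. Kolmogorov dimension $D(\Gamma,\epsilon)$: the smallest integer $d$ such that $\inf_{\Pi_d}\sup_{\boldsymbol\theta\in\Gamma}\|\boldsymbol\theta-\Pi_d\boldsymbol\theta\|_2\le\epsilon$ over $d$-dimensional orthogonal projections. Coordinate-wise Kolmogorov dimension $D_{\mathsf c}(\Gamma,\epsilon)$: the smallest integer $d$ such that some set $A$ of $d$ coordinates satisfies $\sup_{\boldsymbol\theta\in\Gamma}\sum_{i\notin A}\theta_i^2\le\epsilon^2$. *)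

(* Defs.v *)
From Stdlib Require Import Reals List Arith.
From Coquelicot Require Import Coquelicot.
Open Scope R_scope.

Definition seqR := nat -> R.

Definition l2 (x : seqR) : Prop := ex_series (fun i => x i ^ 2).
Definition l2norm (x : seqR) : R := sqrt (Series (fun i => x i ^ 2)).
Definition l2inner (x y : seqR) : R := Series (fun i => x i * y i).

Definition l2open (U : seqR -> Prop) : Prop :=
  forall x, l2 x -> U x ->
    exists r, 0 < r /\
      forall y, l2 y -> l2norm (fun i => y i - x i) < r -> U y.

Definition l2compact (G : seqR -> Prop) : Prop :=
  (forall x, G x -> l2 x) /\
  forall (I : Type) (U : I -> seqR -> Prop),
    (forall j, l2open (U j)) ->
    (forall x, G x -> exists j, U j x) ->
    exists l : list I, forall x, G x -> exists j, In j l /\ U j x.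

Definition convex (G : seqR -> Prop) : Prop :=
  forall x y t, G x -> G y -> 0 <= t <= 1 ->
    G (fun i => t * x i + (1 - t) * y i).

Definition orthosymmetric (G : seqR -> Prop) : Prop :=
  forall x (s : nat -> bool), G x -> G (fun i => if s i then - x i else x i).

Definition orthonormal (d : nat) (u : nat -> seqR) : Prop :=
  (forall k, (k < d)%nat -> l2 (u k)) /\
  (forall j k, (j < d)%nat -> (k < d)%nat ->
     l2inner (u j) (u k) = if Nat.eqb j k then 1 else 0).

Definition proj (d : nat) (u : nat -> seqR) (x : seqR) : seqR :=
  fun i => fold_right Rplus 0 (map (fun k => l2inner x (u k) * u k i) (seq 0 d)).

(* inf over d-dim orthogonal projections of sup_{x in G} ||x - Pi x|| <= eps *)
Definition kolm_ok (G : seqR -> Prop) (eps : R) (d : nat) : Prop :=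
  forall delta, 0 < delta ->
    exists u, orthonormal d u /\
      forall x, G x -> l2norm (fun i => x i - proj d u x i) <= eps + delta.

Definition is_kolm_dim (G : seqR -> Prop) (eps : R) (d : nat) : Prop :=
  kolm_ok G eps d /\ forall d', kolm_ok G eps d' -> (d <= d')%nat.

Definition inb (A : list nat) (i : nat) : bool := existsb (Nat.eqb i) A.

Definition coord_ok (G : seqR -> Prop) (eps : R) (d : nat) : Prop :=
  exists A : list nat, NoDup A /\ length A = d /\
    forall x, G x -> Series (fun i => if inb A i then 0 else x i ^ 2) <= eps ^ 2.

Definition is_coord_kolm_dim (G : seqR -> Prop) (eps : R) (d : nat) : Prop :=
  coord_ok G eps d /\ forall d', coord_ok G eps d' -> (d <= d')%nat.

(* Main.v *)
Require Import Defs.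
From Stdlib Require Import Reals List Arith Lra Lia Wf_nat ClassicalEpsilon FunctionalExtensionality.
From Coquelicot Require Import Coquelicot.
Open Scope R_scope.

Fixpoint sm (n : nat) (f : nat -> R) : R :=
  match n with O => 0 | S m => sm m f + f m end.

Lemma sm_ext n f g : (forall i, (i < n)%nat -> f i = g i) -> sm n f = sm n g.
Proof. induction n; simpl; intros H; auto. rewrite IHn by (intros; apply H; lia). rewrite H by lia. auto. Qed.

Lemma sm_plus n f g : sm n (fun i => f i + g i) = sm n f + sm n g.
Proof. induction n; simpl; [lra|]. rewrite IHn. lra. Qed.

Lemma sm_minus n f g : sm n (fun i => f i - g i) = sm n f - sm n g.
Proof. induction n; simpl; [lra|]. rewrite IHn. lra. Qed.

Lemma sm_scal n c f : sm n (fun i => c * f i) = c * sm n f.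
Proof. induction n; simpl; [lra|]. rewrite IHn. lra. Qed.

Lemma sm_le n f g : (forall i, (i < n)%nat -> f i <= g i) -> sm n f <= sm n g.
Proof. induction n; simpl; intros H; [lra|]. assert (H1 := H n (Nat.lt_succ_diag_r n)).
  assert (sm n f <= sm n g) by (apply IHn; intros; apply H; lia). lra. Qed.

Lemma sm_const n c : sm n (fun _ => c) = INR n * c.
Proof. induction n; simpl sm; [simpl; lra|]. rewrite IHn, S_INR. lra. Qed.

Lemma sm_zero n : sm n (fun _ => 0) = 0.
Proof. rewrite sm_const. lra. Qed.

Lemma sm_swap n m (f : nat -> nat -> R) :
  sm n (fun i => sm m (fun k => f i k)) = sm m (fun k => sm n (fun i => f i k)).
Proof. induction n; simpl.
  - rewrite sm_zero. auto.
  - rewrite IHn. rewrite <- sm_plus. auto. Qed.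

Lemma sm_nonneg n f : (forall i, (i < n)%nat -> 0 <= f i) -> 0 <= sm n f.
Proof. intros H. rewrite <- (sm_zero n). apply sm_le. auto. Qed.

Lemma fr_sm n f : fold_right Rplus 0 (map f (seq 0 n)) = sm n f.
Proof.
  assert (Hg : forall l c, fold_right Rplus c l = fold_right Rplus 0 l + c).
  { induction l; simpl; intros; [lra|]. rewrite IHl. lra. }
  induction n; simpl sm; auto.
  rewrite seq_S, map_app, fold_right_app. simpl. rewrite Hg, IHn. lra.
Qed.

Lemma sum_n_sm f N : sum_n f N = sm (S N) f.
Proof. induction N.
  - rewrite sum_O. simpl. lra.
  - rewrite sum_Sn, IHN. simpl sm at 2. reflexivity. Qed.

Lemma series_fin f N : (forall i, (N <= i)%nat -> f i = 0) ->
  is_series f (sm N f).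
Proof. intros H.
  change (is_lim_seq (sum_n f) (sm N f)).
  apply is_lim_seq_ext_loc with (u := fun _ => sm N f); [|apply is_lim_seq_const].
  exists N. intros n Hn. rewrite sum_n_sm.
  assert (forall k, sm (N + k) f = sm N f).
  { induction k. rewrite Nat.add_0_r; auto. rewrite Nat.add_succ_r. simpl. rewrite IHk, H by lia. lra. }
  replace (S n) with (N + (S n - N))%nat by lia. auto.
Qed.

Lemma Series_fin f N : (forall i, (N <= i)%nat -> f i = 0) -> Series f = sm N f.
Proof. intros H. apply is_series_unique, series_fin; auto. Qed.

Lemma ex_series_fin f N : (forall i, (N <= i)%nat -> f i = 0) -> ex_series f.
Proof. intros H. eexists. apply series_fin with (N := N); auto. Qed.

Lemma sm_le_Series f N : (forall i, 0 <= f i) -> ex_series f -> sm N f <= Series f.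
Proof. intros H0 Hs.
  set (g := fun i => if lt_dec i N then f i else 0).
  replace (sm N f) with (sm N g).
  2:{ apply sm_ext. intros i Hi. unfold g. destruct (lt_dec i N); auto; lia. }
  rewrite <- (Series_fin g N).
  2:{ intros i Hi. unfold g. destruct (lt_dec i N); auto; lia. }
  apply Series_le; auto. intros n. unfold g. destruct (lt_dec n N); split; auto; lra.
Qed.

Lemma Series_le_bound f M : ex_series f -> (forall N, sm N f <= M) -> Series f <= M.
Proof. intros Hs HN.
  assert (H := Series_correct f Hs).
  assert (Hl : is_lim_seq (sum_n f) (Series f)) by exact H.
  assert (Rbar_le (Series f) M).
  { apply is_lim_seq_le with (sum_n f) (fun _ => M); auto.
    intros n. rewrite sum_n_sm. auto. apply is_lim_seq_const. }
  simpl in H0. auto.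
Qed.

Lemma exs_le a b : (forall n, 0 <= a n <= b n) -> ex_series b -> ex_series a.
Proof. intros H Hb. apply (@ex_series_le R_AbsRing R_CompleteNormedModule a b); auto.
  intros n. change (Rabs (a n) <= b n). rewrite Rabs_pos_eq; apply H. Qed.

Lemma exs_plus a b : ex_series a -> ex_series b -> ex_series (fun i => a i + b i).
Proof. intros Ha Hb. exact (@ex_series_plus R_AbsRing R_NormedModule a b Ha Hb). Qed.

Lemma exs_scal c a : ex_series a -> ex_series (fun i => c * a i).
Proof. intros Ha. exact (@ex_series_scal R_AbsRing R_NormedModule c a Ha). Qed.

Lemma l2_plus x y : l2 x -> l2 y -> l2 (fun i => x i + y i).
Proof. unfold l2. intros Hx Hy.
  apply exs_le with (b := fun i => 2 * x i ^ 2 + 2 * y i ^ 2).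
  - intros n. simpl. pose proof (Rle_0_sqr (x n - y n)). pose proof (Rle_0_sqr (x n + y n)). unfold Rsqr in *. split; nra.
  - apply exs_plus; apply exs_scal; auto. Qed.

Lemma l2_scal c x : l2 x -> l2 (fun i => c * x i).
Proof. unfold l2. intros Hx.
  apply exs_le with (b := fun i => c^2 * x i ^ 2).
  - intros n. simpl. split. nra. nra.
  - apply exs_scal; auto. Qed.

Lemma l2_ext x y : (forall i, x i = y i) -> l2 x -> l2 y.
Proof. intros H. apply functional_extensionality in H. subst. auto. Qed.

Lemma l2_sm d (c : nat -> R) (u : nat -> seqR) : (forall k, (k < d)%nat -> l2 (u k)) ->
  l2 (fun i => sm d (fun k => c k * u k i)).
Proof. induction d; intros H; simpl.
  - apply ex_series_fin with (N := 0%nat). intros; simpl; lra.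
  - apply l2_plus. apply IHd; intros; apply H; lia. apply l2_scal. apply H. lia. Qed.

Lemma KL d (u : nat -> seqR) x N : (forall k, (k < d)%nat -> l2 (u k)) ->
  (forall i, (N <= i)%nat -> x i = 0) ->
  sm N (fun i => x i ^ 2) <= (l2norm (fun i => x i - proj d u x i)) ^ 2
     + 2 * sm d (fun k => (sm N (fun i => x i * u k i)) ^ 2).
Proof. intros Hu Hx.
  set (c := fun k => sm N (fun i => x i * u k i)).
  assert (Hin : forall k, l2inner x (u k) = c k).
  { intros k. unfold l2inner. apply Series_fin. intros i Hi. rewrite Hx by auto. lra. }
  assert (Hp : (fun i => x i - proj d u x i) = (fun i => x i + (-1) * sm d (fun k => c k * u k i))).
  { apply functional_extensionality. intros i. unfold proj. rewrite fr_sm.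
    rewrite (sm_ext d _ (fun k => c k * u k i)). lra. intros k _. rewrite Hin. auto. }
  rewrite Hp. set (r := fun i => x i + (-1) * sm d (fun k => c k * u k i)).
  assert (Hxl : l2 x). { apply ex_series_fin with N. intros i Hi. rewrite Hx by auto. simpl; lra. }
  assert (Hrl : l2 r). { apply l2_plus; auto. apply l2_scal. apply l2_sm. auto. }
  assert (H1 : sm N (fun i => r i ^ 2) <= Series (fun i => r i ^ 2)).
  { apply sm_le_Series; auto. intros; apply pow2_ge_0. }
  assert (H0 : 0 <= Series (fun i => r i ^ 2)).
  { eapply Rle_trans; [|apply (sm_le_Series _ 0)]; simpl; auto; try lra. intros; apply pow2_ge_0. }
  assert (H2 : l2norm r ^ 2 = Series (fun i => r i ^ 2)).
  { unfold l2norm. simpl. rewrite Rmult_1_r. apply sqrt_sqrt; auto. }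
  assert (H3 : sm N (fun i => r i * x i) = sm N (fun i => x i ^ 2) - sm d (fun k => c k ^ 2)).
  { unfold r. rewrite (sm_ext N _ (fun i => x i ^ 2 - sm d (fun k => c k * (x i * u k i)))).
    2:{ intros i _. rewrite Rmult_plus_distr_r.
        replace (-1 * sm d (fun k => c k * u k i) * x i) with (- (x i * sm d (fun k => c k * u k i))) by ring.
        rewrite <- (sm_scal d (x i)).
        rewrite (sm_ext d (fun k => x i * _) (fun k => c k * (x i * u k i))). simpl. lra. intros; lra. }
    rewrite sm_minus. rewrite sm_swap. f_equal. apply sm_ext. intros k _.
    rewrite sm_scal. fold (c k). simpl. lra. }
  assert (H4 : sm N (fun i => r i * x i) <= sm N (fun i => (r i ^ 2 + x i ^ 2) / 2)).
  { apply sm_le. intros i _. pose proof (pow2_ge_0 (r i - x i)).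
    replace ((r i ^ 2 + x i ^ 2) / 2) with (r i * x i + (r i - x i) ^ 2 / 2) by (field). lra. }
  rewrite (sm_ext N (fun i => (r i ^ 2 + x i ^ 2) / 2) (fun i => /2 * (r i ^ 2 + x i ^ 2))) in H4 by (intros; lra).
  rewrite sm_scal, sm_plus in H4. change (sm d (fun k => sm N (fun i => x i * u k i) ^ 2)) with (sm d (fun k => c k ^ 2)). lra.
Qed.

Definition sg (b : bool) : R := if b then -1 else 1.

Lemma greedy d N (a : nat -> nat -> R) : exists s : nat -> bool,
  sm d (fun k => (sm N (fun i => sg (s i) * a k i)) ^ 2) <= sm d (fun k => sm N (fun i => (a k i) ^ 2)).
Proof.
  induction N.
  - exists (fun _ => true). simpl. rewrite (sm_ext d _ (fun _ => 0)) by (intros; ring). lra.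
  - destruct IHN as [s Hs].
    set (S := fun k => sm N (fun i => sg (s i) * a k i)).
    set (b := sm d (fun k => S k * a k N)).
    destruct (Rle_dec 0 b) as [Hb|Hb].
    + exists (fun i => if Nat.eqb i N then true else s i).
      simpl sm.
      rewrite (sm_ext d _ (fun k => (S k ^ 2 + a k N ^ 2) + (-2) * (S k * a k N))).
      2:{ intros k _. unfold S. rewrite (sm_ext N _ (fun i => sg (s i) * a k i)).
          rewrite Nat.eqb_refl. simpl sg. ring.
          intros i Hi. destruct (Nat.eqb_spec i N); [lia|auto]. }
      rewrite sm_plus, sm_scal, sm_plus. rewrite (sm_plus d (fun k => sm N _)).
      fold b. change (sm d (fun k => sm N (fun i => sg (s i) * a k i) ^ 2)) with (sm d (fun k => S k ^ 2)) in Hs. simpl in Hs |- *. lra.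
    + exists (fun i => if Nat.eqb i N then false else s i).
      simpl sm.
      rewrite (sm_ext d _ (fun k => (S k ^ 2 + a k N ^ 2) + 2 * (S k * a k N))).
      2:{ intros k _. unfold S. rewrite (sm_ext N _ (fun i => sg (s i) * a k i)).
          rewrite Nat.eqb_refl. simpl sg. ring.
          intros i Hi. destruct (Nat.eqb_spec i N); [lia|auto]. }
      rewrite sm_plus, sm_scal, sm_plus. rewrite (sm_plus d (fun k => sm N _)).
      fold b. change (sm d (fun k => sm N (fun i => sg (s i) * a k i) ^ 2)) with (sm d (fun k => S k ^ 2)) in Hs. simpl in Hs |- *. apply Rnot_le_lt in Hb. lra.
Qed.

Lemma sq_le_abs a b : Rabs a <= b -> a ^ 2 <= b ^ 2.
Proof. intros H. rewrite <- pow2_abs. pose proof (Rabs_pos a). nra. Qed.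

Lemma on_sq d u k : orthonormal d u -> (k < d)%nat -> Series (fun i => u k i ^ 2) = 1 /\ l2 (u k).
Proof. intros [Hl Hi] Hk. split; auto. pose proof (Hi k k Hk Hk) as E. rewrite Nat.eqb_refl in E. rewrite <- E.
  unfold l2inner. apply Series_ext. intros; ring. Qed.

Lemma on_sm d u k N : orthonormal d u -> (k < d)%nat -> sm N (fun i => u k i ^ 2) <= 1.
Proof. intros Ho Hk. destruct (on_sq d u k Ho Hk) as [H1 H2]. rewrite <- H1.
  apply sm_le_Series; auto. intros; apply pow2_ge_0. Qed.

Lemma tail G e1 d eta N z : orthosymmetric G -> kolm_ok G e1 d -> 0 < e1 -> G z ->
  (forall i, (N <= i)%nat -> z i = 0) -> (forall i, Rabs (z i) <= eta) ->
  sm N (fun i => z i ^ 2) <= 4 * e1 ^ 2 + 2 * eta ^ 2 * INR d.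
Proof. intros Hos Hk He1 Hz HN Hb.
  destruct (Hk e1 He1) as [u [Ho Hw]].
  destruct (greedy d N (fun k i => z i * u k i)) as [s Hs].
  set (w := fun i => if s i then - z i else z i).
  assert (Gw : G w) by (apply Hos; auto).
  assert (HKL := KL d u w N (fun k Hk => proj2 (on_sq d u k Ho Hk))).
  assert (Hw0 : forall i, (N <= i)%nat -> w i = 0).
  { intros i Hi. unfold w. rewrite HN by auto. destruct (s i); lra. }
  specialize (HKL Hw0).
  rewrite (sm_ext N (fun i => w i ^ 2) (fun i => z i ^ 2)) in HKL.
  2:{ intros i _. unfold w. destruct (s i); ring. }
  rewrite (sm_ext d (fun k => sm N (fun i => w i * u k i) ^ 2)
     (fun k => sm N (fun i => sg (s i) * (z i * u k i)) ^ 2)) in HKL.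
  2:{ intros k _. f_equal. apply sm_ext. intros i _. unfold w, sg. destruct (s i); ring. }
  assert (Hn := Hw w Gw). pose proof (sqrt_pos (Series (fun i => (w i - proj d u w i) ^ 2))).
  fold (l2norm (fun i => w i - proj d u w i)) in H.
  assert (Hn2 : l2norm (fun i => w i - proj d u w i) ^ 2 <= 4 * e1 ^ 2).
  { replace (4 * e1 ^ 2) with ((e1 + e1) ^ 2) by ring. apply pow_incr. lra. }
  assert (Hc : sm d (fun k => sm N (fun i => (z i * u k i) ^ 2)) <= eta ^ 2 * INR d).
  { rewrite Rmult_comm, <- sm_const. apply sm_le. intros k Hkd.
    apply Rle_trans with (sm N (fun i => eta ^ 2 * u k i ^ 2)).
    - apply sm_le. intros i _. rewrite Rpow_mult_distr. apply Rmult_le_compat_r.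
      apply pow2_ge_0. apply sq_le_abs; auto.
    - rewrite sm_scal. pose proof (on_sm d u k N Ho Hkd). pose proof (pow2_ge_0 eta). nra. }
  lra.
Qed.

Lemma sm_single i f : (forall j, (j < i)%nat -> f j = 0) -> sm (S i) f = f i.
Proof. intros H. simpl. rewrite (sm_ext i f (fun _ => 0)) by auto. rewrite sm_zero. ring. Qed.

Lemma count G d eta N (decA : nat -> bool) : orthosymmetric G -> convex G ->
  kolm_ok G (eta / 2) d -> 0 < eta ->
  (forall i, decA i = true -> exists th, G th /\ eta < Rabs (th i)) ->
  sm N (fun i => if decA i then 1 else 0) <= 5 * INR d.
Proof. intros Hos Hcv Hk He HA.
  destruct (Hk (eta / 4)) as [u [Ho Hw]]; [lra|].
  apply Rle_trans with (sm N (fun i => 5 * sm d (fun k => u k i ^ 2))).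
  - apply sm_le. intros i _. destruct (decA i) eqn:Hd.
    2:{ pose proof (sm_nonneg d (fun k => u k i ^ 2) (fun k _ => pow2_ge_0 _)). lra. }
    destruct (HA i Hd) as [th [Gth Hth]].
    set (y := fun j => if Nat.eqb j i then th i else 0).
    assert (Gy : G y).
    { assert (G (fun j => 1/2 * th j + (1 - 1/2) * (if negb (Nat.eqb j i) then - th j else th j))).
      { apply Hcv; [auto| apply Hos; auto | lra]. }
      replace y with (fun j => 1/2 * th j + (1 - 1/2) * (if negb (Nat.eqb j i) then - th j else th j)); auto.
      apply functional_extensionality. intros j. unfold y. destruct (Nat.eqb_spec j i); simpl.
      rewrite e; field. field. }
    assert (HKL := KL d u y (S i) (fun k Hk0 => proj2 (on_sq d u k Ho Hk0))).
    assert (Hy0 : forall j, (S i <= j)%nat -> y j = 0).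
    { intros j Hj. unfold y. destruct (Nat.eqb_spec j i); [lia|auto]. }
    specialize (HKL Hy0).
    rewrite sm_single in HKL.
    2:{ intros j Hj. unfold y. destruct (Nat.eqb_spec j i); [lia|]. ring. }
    rewrite (sm_ext d (fun k => sm (S i) (fun j => y j * u k j) ^ 2) (fun k => th i ^ 2 * u k i ^ 2)) in HKL.
    2:{ intros k _. rewrite sm_single. unfold y. rewrite Nat.eqb_refl. ring.
        intros j Hj. unfold y. destruct (Nat.eqb_spec j i); [lia|]. ring. }
    rewrite sm_scal in HKL. unfold y in HKL at 1. rewrite Nat.eqb_refl in HKL.
    assert (Hn := Hw y Gy). pose proof (sqrt_pos (Series (fun j => (y j - proj d u y j) ^ 2))).
    fold (l2norm (fun j => y j - proj d u y j)) in H.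
    assert (Hn2 : l2norm (fun j => y j - proj d u y j) ^ 2 <= (3 * eta / 4) ^ 2).
    { apply pow_incr. lra. }
    set (P := sm d (fun k => u k i ^ 2)) in *.
    assert (Ht : eta ^ 2 < th i ^ 2).
    { rewrite <- (pow2_abs (th i)). pose proof (Rabs_pos (th i)). nra. }
    assert (th i ^ 2 * (1 - 2 * P) <= 9 / 16 * eta ^ 2) by nra.
    assert (1 - 2 * P < 9/16).
    { destruct (Rlt_le_dec (1 - 2 * P) (9/16)); auto. nra. }
    lra.
  - rewrite sm_scal, sm_swap. rewrite Rmult_comm, (Rmult_comm 5). apply Rmult_le_compat_r; [lra|].
    rewrite <- (Rmult_1_r (INR d)), <- sm_const. apply sm_le. intros k Hkd. apply (on_sm d); auto.
Qed.

Definition cnt (decA : nat -> bool) N := length (filter decA (seq 0 N)).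

Lemma cnt_S decA N : cnt decA (S N) = (cnt decA N + if decA N then 1 else 0)%nat.
Proof. unfold cnt. rewrite seq_S, filter_app, length_app. simpl. destruct (decA N); simpl; lia. Qed.

Lemma cnt_sm decA N : INR (cnt decA N) = sm N (fun i => if decA i then 1 else 0).
Proof. induction N. reflexivity. rewrite cnt_S, plus_INR, IHN. simpl sm. destruct (decA N); simpl; lra. Qed.

Lemma cnt_mono decA M k : (cnt decA M <= cnt decA (k + M))%nat.
Proof. induction k. simpl; lia. simpl. rewrite cnt_S. lia. Qed.

Lemma cnt_max decA B : (forall N, (cnt decA N <= B)%nat) ->
  exists M0, forall M, (cnt decA M <= cnt decA M0)%nat.
Proof. intros HB.
  assert (forall k M, (B - cnt decA M <= k)%nat -> exists M0, forall M', (cnt decA M' <= cnt decA M0)%nat).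
  { induction k; intros M HM.
    - exists M. intros M'. specialize (HB M'). lia.
    - destruct (Classical_Prop.classic (forall M', (cnt decA M' <= cnt decA M)%nat)) as [H|H].
      + exists M; auto.
      + apply Classical_Pred_Type.not_all_ex_not in H. destruct H as [M' HM'].
        apply (IHk M'). specialize (HB M'). lia. }
  apply (H B 0%nat). lia.
Qed.

Lemma finite_set decA B : (forall N, (cnt decA N <= B)%nat) ->
  exists L, NoDup L /\ (forall i, inb L i = decA i) /\ (length L <= B)%nat.
Proof. intros HB. destruct (cnt_max decA B HB) as [M0 HM0].
  exists (filter decA (seq 0 M0)). split; [|split].
  - apply NoDup_filter, seq_NoDup.
  - intros i. unfold inb. destruct (decA i) eqn:Hd.
    + apply existsb_exists. exists i. split; [|apply Nat.eqb_refl].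
      apply filter_In. split; auto. apply in_seq. split; [lia|].
      destruct (lt_dec i M0); auto. exfalso.
      assert (H1 := cnt_mono decA M0 (i - M0)). replace (i - M0 + M0)%nat with i in H1 by lia.
      specialize (HM0 (S i)). rewrite cnt_S, Hd in HM0. lia.
    + destruct (existsb (Nat.eqb i) (filter decA (seq 0 M0))) eqn:He; auto.
      apply existsb_exists in He. destruct He as [x [Hx Hix]].
      apply Nat.eqb_eq in Hix. subst. apply filter_In in Hx. destruct Hx. congruence.
  - apply HB.
Qed.

Lemma exp_mono x y : x <= y -> exp x <= exp y.
Proof. intros H. destruct (Rle_lt_or_eq_dec _ _ H). left; apply exp_increasing; auto. subst; lra. Qed.

Lemma coord_part G eps eta e1 d1 (decA : nat -> bool) L :
  orthosymmetric G -> convex G -> l2compact G -> kolm_ok G e1 d1 -> 0 < e1 ->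
  4 * e1 ^ 2 + 2 * eta ^ 2 * INR d1 <= eps ^ 2 ->
  (forall i, decA i = false -> forall th, G th -> Rabs (th i) <= eta) ->
  (forall i, inb L i = decA i) -> 0 <= eta ->
  forall th, G th -> Series (fun i => if inb L i then 0 else th i ^ 2) <= eps ^ 2.
Proof. intros Hos Hcv Hcp Hk He1 Hb HA HL Heta th Gth.
  apply Series_le_bound.
  { apply exs_le with (b := fun i => th i ^ 2). intros n. destruct (inb L n); split; try lra; apply pow2_ge_0.
    apply (proj1 Hcp th Gth). }
  intros N.
  set (cond := fun i => andb (Nat.ltb i N) (negb (decA i))).
  set (z := fun i => if cond i then th i else 0).
  assert (Gz : G z).
  { assert (G (fun j => 1/2 * th j + (1 - 1/2) * (if negb (cond j) then - th j else th j))).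
    { apply Hcv; [auto| apply Hos; auto | lra]. }
    replace z with (fun j => 1/2 * th j + (1 - 1/2) * (if negb (cond j) then - th j else th j)); auto.
    apply functional_extensionality. intros j. unfold z. destruct (cond j); simpl; field. }
  assert (Ht := tail G e1 d1 eta N z Hos Hk He1 Gz).
  assert (H1 : forall i, (N <= i)%nat -> z i = 0).
  { intros i Hi. unfold z, cond. destruct (Nat.ltb_spec i N); [lia|]. reflexivity. }
  assert (H2 : forall i, Rabs (z i) <= eta).
  { intros i. unfold z. destruct (cond i) eqn:Hc.
    - unfold cond in Hc. apply andb_prop in Hc. destruct Hc as [_ Hc]. apply HA; auto.
      destruct (decA i); auto; discriminate.
    - rewrite Rabs_R0. auto. }
  specialize (Ht H1 H2).
  rewrite (sm_ext N _ (fun i => z i ^ 2)). lra.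
  intros i Hi. unfold z, cond. rewrite HL. destruct (Nat.ltb_spec i N); [|lia]. simpl.
  destruct (decA i); simpl; ring.
Qed.

Theorem mainTheorem14 (G : seqR -> Prop) (p : R) :
  orthosymmetric G -> convex G -> l2compact G ->
  0 < p < 1 ->
  (exists C, 0 < C /\
     forall eps, 0 < eps <= 1 ->
       exists d, is_kolm_dim G eps d /\ INR d <= C * Rpower eps (- p)) ->
  exists C', 0 < C' /\
     forall eps, 0 < eps <= 1 ->
       exists d, is_coord_kolm_dim G eps d /\
         INR d <= C' * Rpower eps (- (p / (1 - p))).
Proof.
  intros Hos Hcv Hcp Hp [C [HC0 HC]].
  set (C1 := Rmax C 1).
  assert (HC1g : 1 <= C1) by apply Rmax_r.
  assert (HC1 : forall eps, 0 < eps <= 1 -> exists d, kolm_ok G eps d /\ INR d <= C1 * exp (- p * ln eps)).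
  { intros eps He. destruct (HC eps He) as [d [[Hk _] Hd]]. exists d. split; auto.
    unfold Rpower in Hd. eapply Rle_trans; [apply Hd|]. apply Rmult_le_compat_r.
    left; apply exp_pos. apply Rmax_l. }
  assert (Hs1 : 1 <= sqrt C1). { rewrite <- sqrt_1. apply sqrt_le_1; lra. }
  assert (Hsq : sqrt C1 * sqrt C1 = C1) by (apply sqrt_sqrt; lra).
  set (K := / (4 * sqrt C1)).
  assert (HK0 : 0 < K) by (unfold K; apply Rinv_0_lt_compat; lra).
  assert (HK1 : K <= / 4) by (unfold K; apply Rinv_le_contravar; lra).
  assert (HK2 : K * K * C1 = / 16).
  { assert (E : forall s, 1 <= s -> / (4 * s) * / (4 * s) * (s * s) = / 16) by (intros; field; lra).
    specialize (E _ Hs1). rewrite Hsq in E. exact E. }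
  set (w := / (1 - p)).
  assert (Hw : (1 - p) * w = 1) by (unfold w; field; lra).
  assert (Hw1 : 1 <= w) by (unfold w; rewrite <- Rinv_1; apply Rinv_le_contravar; lra).
  exists (5 * C1 * exp (p * (ln 2 - ln K))). split.
  { pose proof (exp_pos (p * (ln 2 - ln K))). nra. }
  intros eps Heps.
  set (L := ln eps).
  assert (HL : L <= 0). { unfold L. rewrite <- ln_1. apply ln_le; lra. }
  assert (HeL : exp L = eps) by (apply exp_ln; lra).
  set (a := exp (L * w)).
  assert (Ha : 0 < a <= 1). { split. apply exp_pos. rewrite <- exp_0. apply exp_mono. nra. }
  set (eta := K * a).
  assert (Heta : 0 < eta <= / 4) by (unfold eta; split; nra).
  destruct (HC1 (eps / 4)) as [d1 [Hk1 Hd1]]; [lra|].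
  destruct (HC1 (eta / 2)) as [d2 [Hk2 Hd2]]; [lra|].
  set (b := exp (- p * L)).
  assert (Hb0 : 0 < b) by apply exp_pos.
  assert (Hd1' : INR d1 <= 4 * C1 * b).
  { replace (ln (eps / 4)) with (L - ln 4) in Hd1.
    2:{ unfold Rdiv. rewrite ln_mult, ln_Rinv; try lra. unfold L; ring. }
    replace (- p * (L - ln 4)) with (- p * L + p * ln 4) in Hd1 by ring.
    rewrite exp_plus in Hd1. fold b in Hd1.
    assert (exp (p * ln 4) <= 4).
    { rewrite <- (exp_ln 4) at 2 by lra. apply exp_mono.
      assert (0 < ln 4) by (rewrite <- ln_1; apply ln_increasing; lra). nra. }
    assert (0 < C1 * b) by nra. assert (C1 * b * exp (p * ln 4) <= C1 * b * 4) by (apply Rmult_le_compat_l; lra). nra. }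
  assert (Habe : a * a * b <= eps * eps).
  { rewrite <- HeL. unfold a, b. rewrite <- !exp_plus. apply exp_mono.
    assert (L * w = L + p * (L * w)).
    { assert (E : L * w = L * ((1 - p) * w) + p * (L * w)) by ring. rewrite Hw in E. lra. }
    assert (p * L <= 0) by nra.
    assert (0 <= 2 * w - 1) by lra.
    assert (p * L * (2 * w - 1) <= 0) by nra. nra. }
  assert (Hed1 : 4 * (eps / 4) ^ 2 + 2 * eta ^ 2 * INR d1 <= eps ^ 2).
  { assert (eta ^ 2 * INR d1 <= eta ^ 2 * (4 * C1 * b)).
    { apply Rmult_le_compat_l; auto. apply pow2_ge_0. }
    assert (eta ^ 2 * (4 * C1 * b) = a * a * b / 4).
    { unfold eta. replace ((K * a) ^ 2 * (4 * C1 * b)) with (4 * (K * K * C1) * (a * a * b)) by ring.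
      rewrite HK2. field. }
    nra. }
  set (decA := fun i => if excluded_middle_informative (exists th, G th /\ eta < Rabs (th i)) then true else false).
  assert (HA1 : forall i, decA i = true -> exists th, G th /\ eta < Rabs (th i)).
  { intros i. unfold decA. destruct (excluded_middle_informative _); auto. discriminate. }
  assert (HA2 : forall i, decA i = false -> forall th, G th -> Rabs (th i) <= eta).
  { intros i. unfold decA. destruct (excluded_middle_informative _) as [|Hn]; [discriminate|].
    intros _ th Gth. destruct (Rle_lt_dec (Rabs (th i)) eta); auto. exfalso; apply Hn; eauto. }
  assert (Hcnt : forall N, (cnt decA N <= 5 * d2)%nat).
  { intros N. apply INR_le. rewrite mult_INR, cnt_sm. simpl (INR 5).
    replace (1 + 1 + 1 + 1 + 1) with 5 by ring.
    apply (count G d2 eta N decA Hos Hcv Hk2); lra || auto. }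
  destruct (finite_set decA _ Hcnt) as [Lst [HNd [HLst Hlen]]].
  assert (Hco : coord_ok G eps (length Lst)).
  { exists Lst. split; [auto|split; [auto|]].
    apply (coord_part G eps eta (eps / 4) d1 decA Lst Hos Hcv Hcp Hk1); auto; lra. }
  destruct (dec_inh_nat_subset_has_unique_least_element (coord_ok G eps)) as [d [[Hd Hmin] _]].
  { intros n. apply Classical_Prop.classic. }
  { eauto. }
  exists d. split. split; auto.
  assert (Hdl : (d <= 5 * d2)%nat) by (specialize (Hmin _ Hco); lia).
  apply le_INR in Hdl. rewrite mult_INR in Hdl. simpl (INR 5) in Hdl.
  replace (ln (eta / 2)) with (ln K + L * w - ln 2) in Hd2.
  2:{ unfold eta, a, Rdiv. rewrite ln_mult, ln_mult, ln_Rinv, ln_exp; try lra; auto using exp_pos.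
      apply Rmult_lt_0_compat; auto using exp_pos. }
  replace (- p * (ln K + L * w - ln 2)) with (p * (ln 2 - ln K) + (- (p / (1 - p)) * L)) in Hd2.
  2:{ replace (p / (1 - p)) with (p * w) by (unfold w; field; lra). nra. }
  rewrite exp_plus in Hd2. unfold Rpower. fold L.
  pose proof (exp_pos (p * (ln 2 - ln K))). pose proof (exp_pos (- (p / (1 - p)) * L)).
  nra.
Qed.
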